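(* Let $p$ be a prime, let $m\ge 0$ be an integer, and let $f:\mathbb{Z}_p\to\mathbb{Z}_p$ be an arithmetic differential operator of order $m$. Then $f$ is an analytic function of level $m$.
   Context: $\mathbb{Z}_p$ denotes the ring of $p$-adic integers with the $p$-adic norm $|\cdot|_p$, $|p|_p=p^{-1}$. The Fermat quotient operator is $\delta:\mathbb{Z}_p\to\mathbb{Z}_p$, $\delta a=(a-a^p)/p$, and $\delta^i$ denotes its $i$-th iterate. A power series $F=\sum_{\alpha} a_\alpha x^\alpha\in\mathbb{Z}_p[[x_0,\dots,x_k]]$ is called restricted if $a_\alpha\to 0$ $p$-adically as $|\alpha|=\alpha_0+\dots+\alpha_k\to\infty$. A function $f:\mathbb{Z}_p\to\mathbb{Z}_p$ is an arithmetic differential operator of order $m$ if there is a restricted power series $F\in\mathbb{Z}_p[[x_0,\dots,x_m]]$ with $f(a)=F(a,\delta a,\dots,\delta^m a)$ for all $a\in\mathbb{Z}_p$. A function $f:\mathbb{Z}_p\to\mathbb{Z}_p$ is analytic of level $m$ if for every $a\in\mathbb{Z}_p$ there is a restricted power series $F_a\in\mathbb{Z}_p[[x]]$ (one variable) such that $f(a+p^m u)=F_a(u)$ for all $u\in\mathbb{Z}_p$. *)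

(* Defs.v *)
From mathcomp Require Import all_boot.
Set Implicit Arguments. Unset Strict Implicit. Unset Printing Implicit Defensive.

(* p-adic integers, represented by their canonical residues:
   x n is the residue of x modulo p^n (0 <= x n < p^n), compatible. *)
Definition is_Zp (p : nat) (x : nat -> nat) : Prop :=
  forall n, x n < p ^ n /\ x n.+1 %% p ^ n = x n.

Definition Zp (p : nat) := {x : nat -> nat | is_Zp p x}.

(* Fermat quotient delta a = (a - a^p)/p on residue sequences:
   (delta a) mod p^n is computed from a mod p^(n+1) =: b as
   -((b^p - b)/p) mod p^n. *)
Definition delta (p : nat) (x : nat -> nat) : nat -> nat :=
  fun n => (p ^ n - ((x n.+1 ^ p - x n.+1) %/ p) %% p ^ n) %% p ^ n.

Definition mindex (k : nat) := {ffun 'I_k -> nat}.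

(* A power series in k variables with coefficients in Z_p is
   restricted: a_alpha -> 0 p-adically as |alpha| -> oo. *)
Definition restricted (p k : nat) (a : mindex k -> Zp p) : Prop :=
  forall n, exists N, forall alpha : mindex k,
    N <= \sum_(i < k) alpha i -> proj1_sig (a alpha) n = 0.

Definition partial_sum (p k : nat) (a : mindex k -> Zp p)
    (x : 'I_k -> nat -> nat) (N n : nat) : nat :=
  (\sum_(alpha : {ffun 'I_k -> 'I_N} | \sum_(i < k) (alpha i : nat) < N)
     proj1_sig (a [ffun i => (alpha i : nat)]) n *
     \prod_(i < k) x i n ^ (alpha i)) %% p ^ n.

Definition series_eval (p k : nat) (a : mindex k -> Zp p)
    (x : 'I_k -> nat -> nat) (y : nat -> nat) : Prop :=
  forall n, exists N, forall N', N <= N' -> y n = partial_sum a x N' n.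

Definition arith_diff_op (p m : nat) (f : Zp p -> Zp p) : Prop :=
  exists F : mindex m.+1 -> Zp p, restricted F /\
    forall a : Zp p,
      series_eval F (fun i : 'I_m.+1 => iter i (delta p) (proj1_sig a))
                  (proj1_sig (f a)).

(* f is analytic of level m: for every a there is a restricted F_a in one
   variable with f(a + p^m u) = F_a(u) for all u. *)
Definition analytic_level (p m : nat) (f : Zp p -> Zp p) : Prop :=
  forall a : Zp p, exists F : mindex 1 -> Zp p, restricted F /\
    forall u b : Zp p,
      (forall n, proj1_sig b n = (proj1_sig a n + p ^ m * proj1_sig u n) %% p ^ n) ->
      series_eval F (fun _ : 'I_1 => proj1_sig u) (proj1_sig (f b)).

(* Main.v *)
Require Import Defs.
From mathcomp Require Import all_boot all_order all_algebra.
From mathcomp Require Import ring zify.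
From Stdlib Require Import ClassicalEpsilon.
Require Import Defs.
Import GRing.Theory Num.Theory.
Open Scope ring_scope.
Set Implicit Arguments. Unset Strict Implicit.

Definition eqm (R : comNzRingType) (p j : nat) (x y : R) :=
  exists d, y = x + (p%:R ^+ j) * d.


Lemma eqm_refl (R : comNzRingType) p j (x : R) : eqm p j x x.
Proof. by exists 0; rewrite mulr0 addr0. Qed.

Lemma eqm_sym (R : comNzRingType) p j (x y : R) : eqm p j x y -> eqm p j y x.
Proof. by case=> d ->; exists (- d); ring. Qed.

Lemma eqm_trans (R : comNzRingType) p j (x y z : R) :
  eqm p j x y -> eqm p j y z -> eqm p j x z.
Proof. by case=> d -> [e ->]; exists (d + e); ring. Qed.

Lemma eqmD (R : comNzRingType) p j (x y x' y' : R) :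
  eqm p j x x' -> eqm p j y y' -> eqm p j (x + y) (x' + y').
Proof. by case=> d -> [e ->]; exists (d + e); ring. Qed.

Lemma eqmN (R : comNzRingType) p j (x x' : R) :
  eqm p j x x' -> eqm p j (- x) (- x').
Proof. by case=> d ->; exists (- d); ring. Qed.

Lemma eqmM (R : comNzRingType) p j (x y x' y' : R) :
  eqm p j x x' -> eqm p j y y' -> eqm p j (x * y) (x' * y').
Proof.
by case=> d -> [e ->]; exists (d * y + x * e + p%:R ^+ j * d * e); ring.
Qed.

Lemma eqmX (R : comNzRingType) p j (x x' : R) k :
  eqm p j x x' -> eqm p j (x ^+ k) (x' ^+ k).
Proof.
move=> h; elim: k => [|k IH]; first exact: eqm_refl.
by rewrite !exprS; apply: eqmM.
Qed.

Lemma eqm_sum (R : comNzRingType) p j (I : Type) (r : seq I) (P : pred I)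
  (F G : I -> R) :
  (forall i, P i -> eqm p j (F i) (G i)) ->
  eqm p j (\sum_(i <- r | P i) F i) (\sum_(i <- r | P i) G i).
Proof.
move=> h; apply: (big_ind2 (fun a b => eqm p j a b)) => //.
  exact: eqm_refl.
by move=> ? ? ? ?; apply: eqmD.
Qed.

Lemma eqm_prod (R : comNzRingType) p j (I : Type) (r : seq I) (P : pred I)
  (F G : I -> R) :
  (forall i, P i -> eqm p j (F i) (G i)) ->
  eqm p j (\prod_(i <- r | P i) F i) (\prod_(i <- r | P i) G i).
Proof.
move=> h; apply: (big_ind2 (fun a b => eqm p j a b)) => //.
  exact: eqm_refl.
by move=> ? ? ? ?; apply: eqmM.
Qed.

Lemma eqm_le (R : comNzRingType) p j j' (x y : R) :
  (j <= j')%N -> eqm p j' x y -> eqm p j x y.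
Proof.
move=> le [d ->]; exists (p%:R ^+ (j' - j) * d).
by rewrite mulrA -exprD subnKC.
Qed.

Lemma eqm0 (R : comNzRingType) p j (x y : R) :
  eqm p j 0 y -> eqm p j x (x + y).
Proof. by case=> d ->; exists d; rewrite add0r. Qed.

Lemma eqm_rmorph (R S : comNzRingType) (f : {rmorphism R -> S}) p j (x y : R) :
  eqm p j x y -> eqm p j (f x) (f y).
Proof. by case=> d ->; exists (f d); rewrite rmorphD rmorphM rmorphXn rmorph_nat. Qed.

Lemma expr_lin (R : comNzRingType) (c d : R) n :
  exists S, (c + d) ^+ n.+1 = c ^+ n.+1 + n.+1%:R * c ^+ n * d + d ^+ 2 * S.
Proof.
elim: n => [|n [S IH]]; first by exists 0; rewrite !expr1 expr0; ring.
exists (c * S + n.+1%:R * c ^+ n + d * S).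
rewrite exprS IH !exprS -[n.+2]addn1 -[n.+1]addn1 !natrD; ring.
Qed.


Lemma PoszX (a b : nat) : Posz (a ^ b)%N = (Posz a) ^+ b.
Proof. by rewrite -natz natrX natz. Qed.

Lemma pow_lin (R : comNzRingType) (p k : nat) (c d : R) : (0 < p)%N -> (0 < k)%N ->
  exists T, (c + p%:R ^+ k * d) ^+ p = c ^+ p + p%:R ^+ k.+1 * T.
Proof.
case: p => // p _; case: k => // k _.
have [S ->] := expr_lin c (p.+1%:R ^+ k.+1 * d) p.
exists (c ^+ p * d + p.+1%:R ^+ k * d ^+ 2 * S).
rewrite !exprS; ring.
Qed.

Lemma nat_eqm (p j x y : nat) : (x %% p ^ j = y %% p ^ j)%N -> eqm p j (Posz x) (Posz y).
Proof.
move=> h; exists ((y %/ p ^ j)%:Z - (x %/ p ^ j)%:Z).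
rewrite {1}(divn_eq x (p ^ j)) {1}(divn_eq y (p ^ j)) h !PoszD !PoszM PoszX natz.
ring.
Qed.

Lemma eqm_modz (p j : nat) (x y : int) : eqm p j x y -> (x %% (p ^ j)%N = y %% (p ^ j)%N)%Z.
Proof.
case=> d ->; rewrite PoszX -natz addrC.
by rewrite mulrC modzMDl.
Qed.

Lemma fermat_int (p : nat) (C : int) : prime p -> eqm p 1 C (C ^+ p).
Proof.
move=> pp.
have pn0 : (p%:Z) != 0 by rewrite -natz pnatr_eq0 -lt0n prime_gt0.
set r := (C %% p)%Z.
have r0 : 0 <= r by apply: modz_ge0.
have Cr : eqm p 1 r C.
  by exists (C %/ p)%Z; rewrite /r expr1 natz {1}(divz_eq C p); ring.
apply: eqm_trans (eqm_sym Cr) _.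
apply: eqm_trans (eqmX p Cr) => //.
case: r r0 {Cr} => // n _.
rewrite -PoszX; apply: nat_eqm; rewrite expn1.
by apply/eqP; rewrite eq_sym fermat_little.
Qed.

Definition dl (p : nat) (X : int) : int := ((X - X ^+ p) %/ p)%Z.

Lemma dlE p X : prime p -> X - X ^+ p = p%:Z * dl p X.
Proof.
move=> pp; have [d e] := fermat_int X pp.
have pn0 : (p%:Z) != 0 by rewrite -natz pnatr_eq0 -lt0n prime_gt0.
rewrite /dl e expr1 natz.
have -> : X - (X + p%:Z * d) = p%:Z * (- d) by ring.
by rewrite mulKz.
Qed.

Lemma dl_eq p X t : prime p -> X - X ^+ p = p%:Z * t -> dl p X = t.
Proof.
move=> pp h; have := dlE X pp; rewrite h => /eqP.
have pn0 : (p%:Z) != 0 by rewrite -natz pnatr_eq0 -lt0n prime_gt0.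
by rewrite (inj_eq (mulfI pn0)) => /eqP.
Qed.

Lemma dl_cong p n Y Y' : prime p -> eqm p n.+1 Y Y' -> eqm p n (dl p Y) (dl p Y').
Proof.
move=> pp [d ->].
have [T eT] := pow_lin Y d (prime_gt0 pp) (ltn0Sn n).
exists (d - p%:Z * T).
apply: dl_eq => //; rewrite eT.
have := dlE Y pp; rewrite natz => e.
have -> : Y + p%:Z ^+ n.+1 * d - (Y ^+ p + p%:Z ^+ n.+2 * T)
   = (Y - Y ^+ p) + p%:Z ^+ n.+1 * d - p%:Z ^+ n.+2 * T by ring.
rewrite e !exprS; ring.
Qed.

Definition Dp (p : nat) (P : {poly int}) : {poly int} :=
  \poly_(j < size (P - P ^+ p)) (((P - P ^+ p)`_j) %/ p)%Z.

Lemma pnz p : prime p -> (p%:Z) != 0.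
Proof. by move=> pp; rewrite -natz pnatr_eq0 -lt0n prime_gt0. Qed.

Lemma coef_natM (R : nzRingType) (p : nat) (T : {poly R}) j : (p%:R * T)`_j = p%:R * T`_j.
Proof. by rewrite mulr_natl coefMn mulr_natl. Qed.

Lemma Dp_eq p P T : prime p -> P - P ^+ p = p%:R * T -> Dp p P = T.
Proof.
move=> pp e; apply/polyP => j; rewrite coef_poly e coef_natM natz.
case: ltnP => hj; first by rewrite mulKz // pnz.
have : (p%:R * T)`_j = 0 by rewrite nth_default.
by rewrite coef_natM natz => /eqP; rewrite mulf_eq0 (negbTE (pnz pp)) /= => /eqP.
Qed.

Lemma Dp_cong p k P P' T : prime p -> P - P ^+ p = p%:R * T ->
  eqm p k.+1 P P' -> eqm p k (Dp p P) (Dp p P').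
Proof.
move=> pp e [d ->].
have [W eW] := pow_lin P d (prime_gt0 pp) (ltn0Sn k).
exists (d - p%:R * W); rewrite (Dp_eq pp e).
apply: Dp_eq => //; rewrite eW.
have -> : P + p%:R ^+ k.+1 * d - (P ^+ p + p%:R ^+ k.+2 * W)
   = (P - P ^+ p) + p%:R ^+ k.+1 * d - p%:R ^+ k.+2 * W by ring.
rewrite e !exprS; ring.
Qed.

Definition Pp (p m : nat) (A : int) (i : nat) : {poly int} :=
  iter i (Dp p) (A%:P + (p%:Z ^+ m)%:P * 'X).

Lemma Pp_inv p m A i : prime p -> (i <= m)%N ->
  exists C R, Pp p m A i = C%:P + p%:R ^+ (m - i) * R.
Proof.
move=> pp; elim: i => [|i IH] hi.
  by exists A, 'X; rewrite subn0 /Pp /= rmorphXn -natz rmorph_nat.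
have [C [R e]] := IH (ltnW hi).
have [k ek] : exists k, (m - i = k.+1)%N by exists (m - i.+1)%N; lia.
rewrite ek in e.
have [W eW] := pow_lin C%:P R (prime_gt0 pp) (ltn0Sn k).
have hC := dlE C pp.
exists (dl p C), (R - p%:R * W).
rewrite /Pp iterS -/(Pp p m A i) e.
have -> : (m - i.+1 = k)%N by lia.
apply: Dp_eq => //; rewrite eW.
have -> : C%:P + p%:R ^+ k.+1 * R - (C%:P ^+ p + p%:R ^+ k.+2 * W)
   = (C - C ^+ p)%:P + p%:R ^+ k.+1 * R - p%:R ^+ k.+2 * W
  by rewrite rmorphB rmorphXn; ring.
rewrite hC rmorphM /= -natz rmorph_nat !exprS; ring.
Qed.

Lemma Pp_step p m A i : prime p -> (i < m)%N ->
  exists T, Pp p m A i - (Pp p m A i) ^+ p = p%:R * T.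
Proof.
move=> pp hi; have [C [R e]] := Pp_inv A pp (ltnW hi).
have [k ek] : exists k, (m - i = k.+1)%N by exists (m - i.+1)%N; lia.
rewrite ek in e; rewrite e.
have [W eW] := pow_lin C%:P R (prime_gt0 pp) (ltn0Sn k).
have hC := dlE C pp.
exists ((dl p C)%:P + p%:R ^+ k * R - p%:R ^+ k.+1 * W).
rewrite eW.
have -> : C%:P + p%:R ^+ k.+1 * R - (C%:P ^+ p + p%:R ^+ k.+2 * W)
   = (C - C ^+ p)%:P + p%:R ^+ k.+1 * R - p%:R ^+ k.+2 * W
  by rewrite rmorphB rmorphXn; ring.
rewrite hC rmorphM /= -natz rmorph_nat !exprS; ring.
Qed.

Lemma Pp_eval p m A U i : prime p -> (i <= m)%N ->
  (Pp p m A i).[U] = iter i (dl p) (A + p%:Z ^+ m * U).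
Proof.
move=> pp; elim: i => [|i IH] hi.
  by rewrite /Pp /= hornerD hornerC hornerMX hornerC.
have [T eT] := Pp_step A pp hi.
rewrite /Pp iterS -/(Pp p m A i) (Dp_eq pp eT) iterS -IH ?(ltnW hi) //.
apply: esym; apply: dl_eq => //.
have := congr1 (fun q => q.[U]) eT.
by rewrite /= hornerD hornerN horner_exp -polyC_natr hornerCM natz.
Qed.

Lemma Pp_cong p m A A' j i : prime p -> (i <= m)%N -> eqm p (j + m) A A' ->
  eqm p (j + (m - i)) (Pp p m A i) (Pp p m A' i).
Proof.
move=> pp; elim: i => [|i IH] hi hA.
  rewrite subn0 /Pp /=; apply: eqmD; last exact: eqm_refl.
  by have := @eqm_rmorph _ _ polyC _ _ _ _ hA.
have [T eT] := Pp_step A pp hi.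
rewrite /Pp !iterS -!/(Pp p m _ i).
apply: Dp_cong eT _ => //.
have -> : ((j + (m - i.+1)).+1 = j + (m - i))%N by lia.
exact: IH (ltnW hi) hA.
Qed.

Lemma eqm_modz_l p n (z : int) : eqm p n ((z %% (p ^ n)%N)%Z) z.
Proof.
exists (z %/ (p ^ n)%N)%Z; rewrite PoszX natz addrC mulrC -divz_eq //.
Qed.

Lemma eqm_small p n (x y : int) : (0 < p)%N -> 0 <= x -> x < (p ^ n)%N -> 0 <= y -> y < (p ^ n)%N ->
  eqm p n x y -> x = y.
Proof.
move=> p0 x0 x1 y0 y1 /eqm_modz; rewrite !modz_small //; by apply/andP.
Qed.

Lemma delta_dl p (x : nat -> nat) n : prime p ->
  Posz (delta p x n) = (dl p (x n.+1)%:Z %% (p ^ n)%N)%Z.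
Proof.
move=> pp; rewrite /delta; set b := x n.+1.
have bp : (b <= b ^ p)%N.
  case: (b) => // b'; rewrite -{1}(expn1 b'.+1) leq_pexp2l // prime_gt0 //.
have dv : (p %| b ^ p - b)%N by rewrite -eqn_mod_dvd // fermat_little.
set t := ((b ^ p - b) %/ p)%N.
have -> : dl p b = - Posz t.
  apply: dl_eq => //.
  have e : (b ^ p - b = t * p)%N by rewrite divnK.
  have : Posz (b ^ p - b)%N = Posz (t * p)%N by rewrite e.
  rewrite -subzn // PoszX PoszM => e'.
  rewrite -opprB e'; ring.
have tl : (t %% p ^ n <= p ^ n)%N by apply: ltnW; rewrite ltn_pmod // expn_gt0 prime_gt0.
rewrite -modz_nat -subzn // -modz_nat.
idtac.
rewrite modzDl.
apply/eqP; rewrite eqz_mod_dvd.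
set q := Posz (p ^ n)%N.
have -> : - (t %% q)%Z - - Posz t = (Posz t %/ q)%Z * q.
  by rewrite {2}(divz_eq (Posz t) q); ring.
by apply: dvdz_mull.
Qed.

Lemma iter_delta p (x : nat -> nat) i : prime p -> forall n X,
  eqm p (n + i) X (Posz (x (n + i)%N)) ->
  eqm p n (Posz (iter i (delta p) x n)) (iter i (dl p) X).
Proof.
move=> pp; elim: i => [|i IH] n X h.
  by apply: eqm_sym; rewrite addn0 in h.
rewrite !iterS delta_dl //.
apply: eqm_trans (eqm_modz_l _ _ _) _.
apply: dl_cong => //.
apply: IH; by rewrite addSnnS.
Qed.

Lemma Zp_compat p (x : nat -> nat) j k : is_Zp p x -> (j <= k)%N -> (x k %% p ^ j = x j)%N.
Proof.
move=> hx; elim: k => [|k IH] hjk.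
  by move: hjk; rewrite leqn0 => /eqP ->; apply: modn_small; case: (hx 0%N).
case: (ltngtP j k.+1) hjk => // [hlt|->] _; last by apply: modn_small; case: (hx k.+1).
rewrite -(IH hlt) -(proj2 (hx k)) modn_dvdm //.
by apply: dvdn_exp2l; rewrite -ltnS.
Qed.

Lemma sum_widen (V : nmodType) k N M (G : mindex k -> V) : (N <= M)%N ->
  \sum_(a : {ffun 'I_k -> 'I_M} | (\sum_(i < k) (a i : nat) < N)%N) G [ffun i => (a i : nat)] =
  \sum_(a : {ffun 'I_k -> 'I_N} | (\sum_(i < k) (a i : nat) < N)%N) G [ffun i => (a i : nat)].
Proof.
case: N => [|N] le.
  by rewrite !big_pred0 // => a; rewrite ltn0.
pose h (a : {ffun 'I_k -> 'I_N.+1}) : {ffun 'I_k -> 'I_M} := [ffun i => widen_ord le (a i)].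
pose h' (b : {ffun 'I_k -> 'I_M}) : {ffun 'I_k -> 'I_N.+1} := [ffun i => inord (b i)].
have bnd : forall (b : {ffun 'I_k -> 'I_M}) i,
    (\sum_(i < k) (b i : nat) < N.+1)%N -> (b i < N.+1)%N.
  by move=> b i hb; apply: leq_ltn_trans hb; rewrite (bigD1 i) //= leq_addr.
rewrite (reindex_onto h h') /=.
  apply: eq_big => [a|a _].
    have -> : \sum_(i < k) (h a i : nat) = \sum_(i < k) (a i : nat).
      by apply: eq_bigr => i _; rewrite ffunE.
    case hs: (_ < _)%N => //=; apply/eqP/ffunP => i.
    by rewrite !ffunE; apply: val_inj; rewrite /= inordK // ffunE.
  by congr G; apply/ffunP => i; rewrite !ffunE.
move=> b hb; apply/ffunP => i; rewrite !ffunE; apply: val_inj.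
by rewrite /= inordK //; apply: bnd.
Qed.

Lemma sum_split (V : nmodType) k N M (G : mindex k -> V) : (N <= M)%N ->
  \sum_(a : {ffun 'I_k -> 'I_M} | (\sum_(i < k) (a i : nat) < M)%N) G [ffun i => (a i : nat)] =
  \sum_(a : {ffun 'I_k -> 'I_N} | (\sum_(i < k) (a i : nat) < N)%N) G [ffun i => (a i : nat)] +
  \sum_(a : {ffun 'I_k -> 'I_M} | (N <= \sum_(i < k) (a i : nat))%N &&
       (\sum_(i < k) (a i : nat) < M)%N) G [ffun i => (a i : nat)].
Proof.
move=> le; rewrite (bigID (fun a : {ffun 'I_k -> 'I_M} => (\sum_(i < k) (a i : nat) < N)%N)) /=.
rewrite -(sum_widen G le); congr (_ + _).
  apply: eq_bigl => a; case: ltnP => //= h; rewrite ?andbT ?andbF //.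
  by apply/esym/negbTE; rewrite -leqNgt (leq_trans le h).
apply: eq_bigl => a /=; rewrite -leqNgt andbC //.
Qed.

Lemma sum_ffun1 (V : nmodType) K (G : nat -> V) :
  \sum_(a : {ffun 'I_1 -> 'I_K}) G (a ord0 : nat) = \sum_(k < K) G k.
Proof.
rewrite (reindex (fun k : 'I_K => [ffun _ : 'I_1 => k])) /=.
  by apply: eq_bigr => k _; rewrite ffunE.
exists (fun a : {ffun 'I_1 -> 'I_K} => a ord0) => [k _|a _]; first by rewrite ffunE.
by apply/ffunP => i; rewrite ffunE (ord1 i).
Qed.

Lemma absmod (z : int) (q : nat) : (0 < q)%N -> Posz (absz (z %% q)%Z) = (z %% q)%Z.
Proof. by move=> q0; rewrite abszE ger0_norm // modz_ge0 // -lt0n. Qed.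

Lemma absmod_lt (z : int) (q : nat) : (0 < q)%N -> (absz (z %% q)%Z < q)%N.
Proof. by move=> q0; rewrite -ltz_nat absmod // ltz_pmod // ltz_nat. Qed.

Lemma eqm_coef p n (P P' : {poly int}) k : eqm p n P P' -> eqm p n P`_k P'`_k.
Proof. by case=> d ->; exists d`_k; rewrite coefD -natrX coef_natM natrX. Qed.

Lemma eqm_polyC p n (x y : int) : eqm p n x y -> eqm p n x%:P y%:P.
Proof. exact: (@eqm_rmorph _ _ polyC). Qed.

Lemma eqm_nat_small p n (x y : nat) : (0 < p)%N -> (x < p ^ n)%N -> (y < p ^ n)%N ->
  eqm p n (Posz x) (Posz y) -> x = y.
Proof.
move=> p0 hx hy h; apply/eqP; rewrite -eqz_nat; apply/eqP.
by apply: (eqm_small p0) h; rewrite ?ltz_nat.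
Qed.

Lemma eqm_sum0 (R : comNzRingType) p j (I : Type) (r : seq I) (P : pred I) (G : I -> R) :
  (forall i, P i -> eqm p j 0 (G i)) -> eqm p j 0 (\sum_(i <- r | P i) G i).
Proof.
move=> h; have := eqm_sum r (F := fun _ => 0) h.
by rewrite big1_eq.
Qed.

Lemma sum_ffunE k (al : {ffun 'I_k -> nat}) :
  \sum_(i < k) [ffun i => al i] i = \sum_(i < k) al i.
Proof. by apply: eq_bigr => i _; rewrite ffunE. Qed.

Theorem theorem1p4 (p m : nat) (f : Zp p -> Zp p) :
  prime p -> @arith_diff_op p m f -> @analytic_level p m f.
Proof.
move=> pp [F [HR HF]] a.
have p0 : (0 < p)%N by apply: prime_gt0.
have pn0 : forall n, (0 < p ^ n)%N by move=> n; rewrite expn_gt0 p0.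
pose Nr n := proj1_sig (constructive_indefinite_description _ (HR n)).
have HNr : forall n (al : mindex m.+1), (Nr n <= \sum_(i < m.+1) al i)%N -> proj1_sig (F al) n = 0%N.
  by move=> n; exact: (proj2_sig (constructive_indefinite_description _ (HR n))).
pose Nn n := (\max_(j < n.+1) Nr j)%N.
have HNn1 : forall n, (Nr n <= Nn n)%N by move=> n; exact: (leq_bigmax (F := fun j : 'I_n.+1 => Nr j) ord_max).
have HNn2 : forall n, (Nn n <= Nn n.+1)%N.
  by move=> n; rewrite /Nn [X in (_ <= X)%N]big_ord_recr leq_maxl.
pose av := proj1_sig a.
have Ha : is_Zp p av := proj2_sig a.
pose Fz (be : mindex m.+1) n : int := Posz (proj1_sig (F be) n).
pose GQ n (A : int) (be : mindex m.+1) : {poly int} :=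
  (Fz be n)%:P * \prod_(i < m.+1) Pp p m A i ^+ be i.
pose Q n := \sum_(al : {ffun 'I_m.+1 -> 'I_(Nn n)} | (\sum_(i < m.+1) (al i : nat) < Nn n)%N)
    GQ n (Posz (av (n + m)%N)) [ffun i => (al i : nat)].
have HQ : forall n, eqm p n (Q n) (Q n.+1).
  move=> n; rewrite /Q [X in eqm _ _ _ X](sum_split _ (HNn2 n)).
  apply: eqm_trans (eqm0 _ _).
    apply: eqm_sum => al hal; rewrite /GQ; apply: eqmM.
      apply: eqm_polyC; apply: nat_eqm.
      rewrite [in RHS]Zp_compat //; last exact: (proj2_sig (F _)).
      by apply: modn_small; case: (proj2_sig (F [ffun i => (al i : nat)]) n).
    apply: eqm_prod => i _; apply: eqmX.
    apply: (eqm_le (leq_addr (m - i) n)).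
    apply: Pp_cong => //; first by rewrite -ltnS.
    apply: nat_eqm; rewrite [in RHS](@Zp_compat p av (n + m) (n.+1 + m) Ha); last lia.
    by apply: modn_small; case: (Ha (n + m)%N).
  apply: eqm_sum0 => al /andP [hal1 hal2]; rewrite /GQ.
  have hz : eqm p n 0 (Fz [ffun i => (al i : nat)] n.+1).
    apply: (nat_eqm (x := 0%N)); rewrite mod0n Zp_compat //; last exact: (proj2_sig (F _)).
    apply/esym/HNr; apply: leq_trans (HNn1 n) _.
    by rewrite (eq_bigr (fun i => (al i : nat))) // => i _; rewrite ffunE.
  apply: eqm_trans; last exact: (eqmM (eqm_polyC hz) (eqm_refl _ _ _)).
  by rewrite rmorph0 mul0r; exact: eqm_refl.
pose cv k n := absz (((Q n)`_k) %% (p ^ n)%N)%Z.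
have Hcv : forall k, is_Zp p (cv k).
  move=> k n; split; first exact: absmod_lt.
  apply: (@eqm_nat_small p n _ _ p0); [by rewrite ltn_pmod | exact: absmod_lt |].
  rewrite -modz_nat; apply: eqm_trans (eqm_modz_l _ _ _) _.
  rewrite /cv absmod //; apply: eqm_trans (eqm_le (leqnSn n) (eqm_modz_l _ _ _)) _.
  apply: eqm_trans (eqm_sym (eqm_coef k (HQ n))) _.
  by rewrite absmod //; apply: eqm_sym; apply: eqm_modz_l.
pose cF (be : mindex 1) : Zp p := @exist _ (is_Zp p) (cv (be ord0)) (Hcv (be ord0)).
exists cF; split.
  move=> n; exists (size (Q n)) => be hbe; rewrite /= /cv.
  by rewrite big_ord1 in hbe; rewrite nth_default // mod0z.
move=> u b Hb n.
pose uv := sval u; have Hu : is_Zp p uv := proj2_sig u.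
pose bv := sval b.
have [N0 HN0] := HF b n.
exists (size (Q n)) => K hK.
pose N' := maxn N0 (Nn n).
rewrite (HN0 N' (leq_maxl _ _)).
pose U := Posz (uv (n + m)%N). pose A := Posz (av (n + m)%N).
pose X := A + p%:Z ^+ m * U.
apply: (@eqm_nat_small p n _ _ p0); [by rewrite /partial_sum ltn_pmod | by rewrite /partial_sum ltn_pmod |].
pose GZ (be : mindex m.+1) := Fz be n * \prod_(i < m.+1) (Posz (iter i (delta p) bv n)) ^+ (be i).
pose GZ' (be : mindex m.+1) := Fz be n * \prod_(i < m.+1) (iter i (dl p) X) ^+ (be i).
have S1 : eqm p n (Posz (partial_sum F (fun i : 'I_m.+1 => iter i (delta p) bv) N' n))
   (\sum_(al : {ffun 'I_m.+1 -> 'I_N'} | (\sum_(i < m.+1) (al i : nat) < N')%N) GZ [ffun i => (al i : nat)]).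
  rewrite /partial_sum -modz_nat; apply: eqm_trans (eqm_modz_l _ _ _) _.
  suff -> : Posz (\sum_(al : {ffun 'I_m.+1 -> 'I_N'} | (\sum_(i < m.+1) (al i : nat) < N')%N)
      sval (F [ffun i => (al i : nat)]) n * \prod_(i < m.+1) iter i (delta p) bv n ^ al i)%N
     = \sum_(al : {ffun 'I_m.+1 -> 'I_N'} | (\sum_(i < m.+1) (al i : nat) < N')%N) GZ [ffun i => (al i : nat)].
    exact: eqm_refl.
  rewrite -natz natr_sum; apply: eq_bigr => al _.
  rewrite natrM natr_prod /GZ /Fz natz; congr (_ * _).
  by apply: eq_bigr => i _; rewrite natrX natz ffunE.
have S2 : \sum_(al : {ffun 'I_m.+1 -> 'I_N'} | (\sum_(i < m.+1) (al i : nat) < N')%N) GZ [ffun i => (al i : nat)]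
   = \sum_(al : {ffun 'I_m.+1 -> 'I_(Nn n)} | (\sum_(i < m.+1) (al i : nat) < Nn n)%N) GZ [ffun i => (al i : nat)].
  rewrite (sum_split _ (leq_maxr N0 (Nn n))) [X in _ + X = _]big1 ?addr0 // => al /andP [h1 _].
  rewrite /GZ /Fz HNr ?mul0r //; apply: leq_trans (HNn1 n) _.
  by rewrite (eq_bigr (fun i => (al i : nat))) // => i _; rewrite ffunE.
have hX : forall i, (i <= m)%N -> eqm p (n + i) X (Posz (bv (n + i)%N)).
  move=> i hi; rewrite /bv Hb -modz_nat.
  apply: eqm_trans (eqm_sym (eqm_modz_l _ _ _)).
  rewrite PoszD PoszM PoszX.
  have hA : eqm p (n + i) A (Posz (av (n + i)%N)).
    apply: nat_eqm; rewrite Zp_compat //; last lia.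
    by apply/esym/modn_small; case: (Ha (n + i)%N).
  have hU : eqm p (n + i) U (Posz (uv (n + i)%N)).
    apply: nat_eqm; rewrite Zp_compat //; last lia.
    by apply/esym/modn_small; case: (Hu (n + i)%N).
  by apply: eqmD hA (eqmM (eqm_refl _ _ _) hU).
have S3 : eqm p n
   (\sum_(al : {ffun 'I_m.+1 -> 'I_(Nn n)} | (\sum_(i < m.+1) (al i : nat) < Nn n)%N) GZ [ffun i => (al i : nat)])
   (\sum_(al : {ffun 'I_m.+1 -> 'I_(Nn n)} | (\sum_(i < m.+1) (al i : nat) < Nn n)%N) GZ' [ffun i => (al i : nat)]).
  apply: eqm_sum => al _; apply: eqmM; first exact: eqm_refl.
  apply: eqm_prod => i _; apply: eqmX; apply: iter_delta => //.
  by apply: hX; rewrite -ltnS.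
have S4 : \sum_(al : {ffun 'I_m.+1 -> 'I_(Nn n)} | (\sum_(i < m.+1) (al i : nat) < Nn n)%N) GZ' [ffun i => (al i : nat)]
   = (Q n).[U].
  rewrite /Q horner_sum; apply: eq_bigr => al _.
  rewrite /GQ hornerCM horner_prod /GZ'; congr (_ * _); apply: eq_bigr => i _.
  by rewrite horner_exp Pp_eval // -ltnS.
have S6 : eqm p n (Q n).[U] (\sum_(k < K) Posz (cv k n) * (Posz (uv n)) ^+ k).
  rewrite (horner_coef_wide _ hK); apply: eqm_sum => k _; apply: eqmM.
    by rewrite /cv absmod //; apply: eqm_sym; apply: eqm_modz_l.
  apply: eqmX; apply: nat_eqm; rewrite Zp_compat //; last lia.
  by apply/esym/modn_small; case: (Hu n).
have S7 : eqm p n (\sum_(k < K) Posz (cv k n) * (Posz (uv n)) ^+ k)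
   (Posz (partial_sum cF (fun=> sval u) K n)).
  rewrite /partial_sum -modz_nat; apply: eqm_trans (eqm_sym (eqm_modz_l _ _ _)).
  have -> : (\sum_(be : {ffun 'I_1 -> 'I_K} | (\sum_(i < 1) (be i : nat) < K)%N)
      sval (cF [ffun i => (be i : nat)]) n * \prod_(i < 1) sval u n ^ be i)%N
    = (\sum_(be : {ffun 'I_1 -> 'I_K}) (fun k : nat => cv k n * uv n ^ k) (be ord0 : nat))%N.
    apply: eq_big => [be|be _]; first by rewrite big_ord1 ltn_ord.
    by rewrite /= big_ord1 ffunE.
  rewrite (@sum_ffun1 nat K (fun k : nat => cv k n * uv n ^ k)%N).
  rewrite -[Posz (\sum_(k < K) _)%N]natz natr_sum; apply: eqm_sum => k _.
  by rewrite natrM natrX !natz; exact: eqm_refl.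
apply: eqm_trans S1 _; rewrite S2; apply: eqm_trans S3 _; rewrite S4.
exact: eqm_trans S6 S7.
Qed.
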